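(* Let $S$ be a permutative Gray monoid acting on a 2-category $X$. A 2-cell $\langle p,A,F\rangle$ of $S^{-1}X$ is invertible if and only if the 1-cell $p$ is an equivalence in $S$, the 2-cell $A$ is invertible in $S$, and the 2-cell $F$ is invertible in $X$.
   Context: Permutative Gray monoid $(S,\oplus,e,\beta)$: a 2-category with a strictly associative, strictly unital 2-functor $\oplus\colon S\otimes S\to S$ out of the Gray tensor product (written as juxtaposition) and a symmetry 2-natural isomorphism $\beta$ satisfying the usual axioms. An action of $S$ on $X$ is a 2-functor $S\otimes X\to X$, $(s,x)\mapsto sx$, with $ex=x$ and $(st)x=s(tx)$ on all cells. $S^{-1}X$: objects $(a,x)$; 1-cells $(a,x)\to(b,y)$ are triples $(s,\alpha,\phi)$ with $s\in S$, $\alpha\colon sa\to b$ in $S$, $\phi\colon sx\to y$ in $X$; 2-cells $(s,\alpha,\phi)\Rightarrow(s',\alpha',\phi')$ are equivalence classes $\langle p,A,F\rangle$ with $p\colon s\to s'$ a 1-cell of $S$, $A\colon\alpha\Rightarrow\alpha'\circ pa$, $F\colon\phi\Rightarrow\phi'\circ px$, where $\langle p,A,F\rangle=\langle q,B,G\rangle$ iff there exists an invertible 2-cell $\Theta\colon p\Rightarrow q$ with $(\alpha'*\Theta a)\circ A=B$ and $(\phi'*\Theta x)\circ F=G$; vertical composition $\langle p',A',F'\rangle\circ\langle p,A,F\rangle=\langle p'p,(A'*pa)\circ A,(F'*px)\circ F\rangle$, identity $\langle 1,1,1\rangle$. A 1-cell is an equivalence if it has a pseudo-inverse up to invertible 2-cells.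 *)

(* Defs.v *)
From Stdlib Require Import Logic.Eqdep.

Record Cat2Data : Type := {
  ob : Type;
  hom : ob -> ob -> Type;
  cell : forall a b : ob, hom a b -> hom a b -> Type;
  id1 : forall a : ob, hom a a;
  comp1 : forall a b c : ob, hom b c -> hom a b -> hom a c;   (* comp1 g f = g o f *)
  id2 : forall (a b : ob) (f : hom a b), cell a b f f;
  vcomp : forall (a b : ob) (f g h : hom a b),
      cell a b g h -> cell a b f g -> cell a b f h;            (* vcomp beta alpha = beta o alpha *)
  hcomp : forall (a b c : ob) (f f' : hom a b) (g g' : hom b c),
      cell b c g g' -> cell a b f f' ->
      cell a c (comp1 a b c g f) (comp1 a b c g' f')
}.

Arguments hom {_} _ _.
Arguments cell {_ _ _} _ _.
Arguments id1 {_} _.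
Arguments comp1 {_ _ _ _} _ _.
Arguments id2 {_ _ _} _.
Arguments vcomp {_ _ _ _ _ _} _ _.
Arguments hcomp {_ _ _ _ _ _ _ _} _ _.

(* heterogeneous equality of 1-cells / 2-cells (used to state strict
   equalities whose two sides only have propositionally equal boundaries) *)
Definition tot1 {C : Cat2Data} {a b : ob C} (f : hom a b)
  : {a : ob C & {b : ob C & hom a b}} := existT _ a (existT _ b f).
Definition heq1 {C : Cat2Data} {a b a' b' : ob C} (f : hom a b) (g : hom a' b')
  : Prop := tot1 f = tot1 g.

Definition tot2 {C : Cat2Data} {a b : ob C} {f g : hom a b} (al : cell f g)
  : {a : ob C & {b : ob C & {f : hom a b & {g : hom a b & cell f g}}}} :=
  existT _ a (existT _ b (existT _ f (existT _ g al))).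
Definition heq2 {C : Cat2Data} {a b a' b' : ob C} {f g : hom a b} {f' g' : hom a' b'}
  (al : cell f g) (be : cell f' g') : Prop := tot2 al = tot2 be.

Definition castc {C : Cat2Data} {a b : ob C} {f f' g g' : hom a b}
  (e1 : f = f') (e2 : g = g') (al : cell f g) : cell f' g' :=
  match e1 in _ = f1 return cell f1 g' with
  | eq_refl => match e2 in _ = g1 return cell f g1 with eq_refl => al end
  end.

Definition cast1 {C : Cat2Data} {a a' b b' : ob C}
  (e1 : a = a') (e2 : b = b') (f : hom a b) : hom a' b' :=
  match e1 in _ = a1 return hom a1 b' with
  | eq_refl => match e2 in _ = b1 return hom a b1 with eq_refl => f end
  end.

Record Cat2Laws (C : Cat2Data) : Prop := {
  c_assoc : forall (a b c d : ob C) (h : hom c d) (g : hom b c) (f : hom a b),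
      comp1 h (comp1 g f) = comp1 (comp1 h g) f;
  c_idl : forall (a b : ob C) (f : hom a b), comp1 (id1 b) f = f;
  c_idr : forall (a b : ob C) (f : hom a b), comp1 f (id1 a) = f;
  v_assoc : forall (a b : ob C) (f g h k : hom a b)
      (ga : cell h k) (be : cell g h) (al : cell f g),
      vcomp ga (vcomp be al) = vcomp (vcomp ga be) al;
  v_idl : forall (a b : ob C) (f g : hom a b) (al : cell f g), vcomp (id2 g) al = al;
  v_idr : forall (a b : ob C) (f g : hom a b) (al : cell f g), vcomp al (id2 f) = al;
  h_id2 : forall (a b c : ob C) (f : hom a b) (g : hom b c),
      hcomp (id2 g) (id2 f) = id2 (comp1 g f);
  h_interchange : forall (a b c : ob C) (f f' f'' : hom a b) (g g' g'' : hom b c)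
      (be' : cell g' g'') (be : cell g g') (al' : cell f' f'') (al : cell f f'),
      hcomp (vcomp be' be) (vcomp al' al) = vcomp (hcomp be' al') (hcomp be al);
  h_assoc : forall (a b c d : ob C) (f f' : hom a b) (g g' : hom b c) (h h' : hom c d)
      (ga : cell h h') (be : cell g g') (al : cell f f'),
      heq2 (hcomp ga (hcomp be al)) (hcomp (hcomp ga be) al);
  h_idl : forall (a b : ob C) (f f' : hom a b) (al : cell f f'),
      heq2 (hcomp (id2 (id1 b)) al) al;
  h_idr : forall (a b : ob C) (f f' : hom a b) (al : cell f f'),
      heq2 (hcomp al (id2 (id1 a))) al
}.

Arguments c_assoc {_} _ {_ _ _ _} _ _ _.
Arguments c_idl {_} _ {_ _} _.
Arguments c_idr {_} _ {_ _} _.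

Record Cat2 : Type := { c2d :> Cat2Data; c2l : Cat2Laws c2d }.

Definition inv2 {C : Cat2Data} {a b : ob C} {f g : hom a b} (th : cell f g) : Prop :=
  exists th' : cell g f, vcomp th' th = id2 f /\ vcomp th th' = id2 g.

Definition isEquiv1 {C : Cat2Data} {a b : ob C} (p : hom a b) : Prop :=
  exists q : hom b a,
    (exists Ph : cell (comp1 q p) (id1 a), inv2 Ph) /\
    (exists Ps : cell (comp1 p q) (id1 b), inv2 Ps).

(* 2-functors A (x) B -> C out of the Gray tensor product, given by     *)
(* their cubical data: 2-functors in each variable separately, agreeing *)
(* on objects, plus invertible interchange 2-cells                      *)

Record CubData (A B C : Cat2Data) : Type := {
  F0 : ob A -> ob B -> ob C;
  L1 : forall (a : ob A) (b b' : ob B), hom b b' -> hom (F0 a b) (F0 a b');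
  L2 : forall (a : ob A) (b b' : ob B) (g g' : hom b b'),
      cell g g' -> cell (L1 a b b' g) (L1 a b b' g');
  R1 : forall (a a' : ob A), hom a a' -> forall b : ob B, hom (F0 a b) (F0 a' b);
  R2 : forall (a a' : ob A) (p p' : hom a a'),
      cell p p' -> forall b : ob B, cell (R1 a a' p b) (R1 a a' p' b);
  Sg : forall (a a' : ob A) (b b' : ob B) (p : hom a a') (g : hom b b'),
      cell (comp1 (L1 a' b b' g) (R1 a a' p b)) (comp1 (R1 a a' p b') (L1 a b b' g));
  Sginv : forall (a a' : ob A) (b b' : ob B) (p : hom a a') (g : hom b b'),
      cell (comp1 (R1 a a' p b') (L1 a b b' g)) (comp1 (L1 a' b b' g) (R1 a a' p b))
}.

Arguments F0 {_ _ _} _ _ _.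
Arguments L1 {_ _ _} _ _ {_ _} _.
Arguments L2 {_ _ _} _ _ {_ _ _ _} _.
Arguments R1 {_ _ _} _ {_ _} _ _.
Arguments R2 {_ _ _} _ {_ _ _ _} _ _.
Arguments Sg {_ _ _} _ {_ _ _ _} _ _.
Arguments Sginv {_ _ _} _ {_ _ _ _} _ _.

Record CubLaws (A B C : Cat2) (F : CubData A B C) : Prop := {
  L1_id : forall a b, L1 F a (id1 b) = id1 (F0 F a b);
  L1_comp : forall a (b b' b'' : ob B) (g1 : hom b b') (g2 : hom b' b''),
      L1 F a (comp1 g2 g1) = comp1 (L1 F a g2) (L1 F a g1);
  L2_id : forall a (b b' : ob B) (g : hom b b'), L2 F a (id2 g) = id2 (L1 F a g);
  L2_v : forall a (b b' : ob B) (g g' g'' : hom b b') (ps : cell g' g'') (ph : cell g g'),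
      L2 F a (vcomp ps ph) = vcomp (L2 F a ps) (L2 F a ph);
  L2_h : forall a (b b' b'' : ob B) (g g' : hom b b') (k k' : hom b' b'')
      (ps : cell k k') (ph : cell g g'),
      heq2 (L2 F a (hcomp ps ph)) (hcomp (L2 F a ps) (L2 F a ph));
  R1_id : forall a b, R1 F (id1 a) b = id1 (F0 F a b);
  R1_comp : forall (a a' a'' : ob A) b (p1 : hom a a') (p2 : hom a' a''),
      R1 F (comp1 p2 p1) b = comp1 (R1 F p2 b) (R1 F p1 b);
  R2_id : forall (a a' : ob A) b (p : hom a a'), R2 F (id2 p) b = id2 (R1 F p b);
  R2_v : forall (a a' : ob A) b (p p' p'' : hom a a') (ps : cell p' p'') (ph : cell p p'),
      R2 F (vcomp ps ph) b = vcomp (R2 F ps b) (R2 F ph b);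
  R2_h : forall (a a' a'' : ob A) b (p p' : hom a a') (q q' : hom a' a'')
      (ps : cell q q') (ph : cell p p'),
      heq2 (R2 F (hcomp ps ph) b) (hcomp (R2 F ps b) (R2 F ph b));
  Sg_inv1 : forall (a a' : ob A) (b b' : ob B) (p : hom a a') (g : hom b b'),
      vcomp (Sginv F p g) (Sg F p g) = id2 _;
  Sg_inv2 : forall (a a' : ob A) (b b' : ob B) (p : hom a a') (g : hom b b'),
      vcomp (Sg F p g) (Sginv F p g) = id2 _;
  Sg_nat : forall (a a' : ob A) (b b' : ob B) (p p' : hom a a') (g g' : hom b b')
      (th : cell p p') (ph : cell g g'),
      vcomp (hcomp (R2 F th b') (L2 F a ph)) (Sg F p g)
      = vcomp (Sg F p' g') (hcomp (L2 F a' ph) (R2 F th b));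
  Sg_id1 : forall (a : ob A) (b b' : ob B) (g : hom b b'),
      heq2 (Sg F (id1 a) g) (id2 (L1 F a g));
  Sg_id2 : forall (a a' : ob A) (b : ob B) (p : hom a a'),
      heq2 (Sg F p (id1 b)) (id2 (R1 F p b));
  Sg_compL : forall (a a' : ob A) (b b' b'' : ob B)
      (p : hom a a') (g1 : hom b b') (g2 : hom b' b''),
      heq2 (Sg F p (comp1 g2 g1))
        (vcomp (hcomp (Sg F p g2) (id2 (L1 F a g1)))
           (castc eq_refl (c_assoc (c2l C) (L1 F a' g2) (R1 F p b') (L1 F a g1))
              (hcomp (id2 (L1 F a' g2)) (Sg F p g1))));
  Sg_compR : forall (a a' a'' : ob A) (b b' : ob B)
      (p1 : hom a a') (p2 : hom a' a'') (g : hom b b'),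
      heq2 (Sg F (comp1 p2 p1) g)
        (vcomp (hcomp (id2 (R1 F p2 b')) (Sg F p1 g))
           (castc eq_refl (eq_sym (c_assoc (c2l C) (R1 F p2 b') (L1 F a' g) (R1 F p1 b)))
              (hcomp (Sg F p2 g) (id2 (R1 F p1 b)))))
}.

Arguments CubLaws {_ _ _} _.
Arguments R1_comp {_ _ _ _} _ {_ _ _} _ _ _.
Arguments R1_id {_ _ _ _} _ _ _.

Record UnitL (A B : Cat2) (F : CubData A B B) (e : ob A) : Prop := {
  ul_ob : forall x, F0 F e x = x;
  ul_1 : forall (x y : ob B) (f : hom x y), heq1 (L1 F e f) f;
  ul_2 : forall (x y : ob B) (f g : hom x y) (ph : cell f g), heq2 (L2 F e ph) ph
}.

Arguments UnitL {_ _} _ _.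

Record UnitR (A : Cat2) (P : CubData A A A) (e : ob A) : Prop := {
  ur_ob : forall s, F0 P s e = s;
  ur_1 : forall (s s' : ob A) (p : hom s s'), heq1 (R1 P p e) p;
  ur_2 : forall (s s' : ob A) (p p' : hom s s') (th : cell p p'), heq2 (R2 P th e) th
}.

Arguments UnitR {_} _ _.

Record ActAssoc (A B : Cat2) (P : CubData A A A) (F : CubData A B B) : Prop := {
  aa_ob : forall s t x, F0 F (F0 P s t) x = F0 F s (F0 F t x);
  aa_1a : forall (s s' t : ob A) x (p : hom s s'),
      heq1 (R1 F (R1 P p t) x) (R1 F p (F0 F t x));
  aa_1b : forall (s t t' : ob A) x (q : hom t t'),
      heq1 (R1 F (L1 P s q) x) (L1 F s (R1 F q x));
  aa_1c : forall (s t : ob A) (x y : ob B) (f : hom x y),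
      heq1 (L1 F (F0 P s t) f) (L1 F s (L1 F t f));
  aa_2a : forall (s s' t : ob A) x (p p' : hom s s') (th : cell p p'),
      heq2 (R2 F (R2 P th t) x) (R2 F th (F0 F t x));
  aa_2b : forall (s t t' : ob A) x (q q' : hom t t') (ps : cell q q'),
      heq2 (R2 F (L2 P s ps) x) (L2 F s (R2 F ps x));
  aa_2c : forall (s t : ob A) (x y : ob B) (f g : hom x y) (ph : cell f g),
      heq2 (L2 F (F0 P s t) ph) (L2 F s (L2 F t ph));
  aa_Sab : forall (s s' t t' : ob A) x (p : hom s s') (q : hom t t'),
      heq2 (R2 F (Sg P p q) x) (Sg F p (R1 F q x));
  aa_Sbc : forall (s t t' : ob A) (x y : ob B) (q : hom t t') (f : hom x y),
      heq2 (Sg F (L1 P s q) f) (L2 F s (Sg F q f));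
  aa_Sac : forall (s s' t : ob A) (x y : ob B) (p : hom s s') (f : hom x y),
      heq2 (Sg F (R1 P p t) f) (Sg F p (L1 F t f))
}.

Arguments ActAssoc {_ _} _ _.
Arguments aa_ob {_ _ _ _} _ _ _ _.

Record PGM : Type := {
  pS :> Cat2;
  pplus : CubData pS pS pS;
  pplus_laws : CubLaws pplus;
  pe : ob pS;
  pplus_unitL : UnitL pplus pe;
  pplus_unitR : UnitR pplus pe;
  pplus_assoc : ActAssoc pplus pplus;
  pbeta : forall s t : ob pS, hom (F0 pplus s t) (F0 pplus t s);
  pbeta_nat1 : forall (s s' t : ob pS) (p : hom s s'),
      comp1 (pbeta s' t) (R1 pplus p t) = comp1 (L1 pplus t p) (pbeta s t);
  pbeta_nat2 : forall (s t t' : ob pS) (q : hom t t'),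
      comp1 (pbeta s t') (L1 pplus s q) = comp1 (R1 pplus q s) (pbeta s t);
  pbeta_nat1_2 : forall (s s' t : ob pS) (p p' : hom s s') (th : cell p p'),
      heq2 (hcomp (id2 (pbeta s' t)) (R2 pplus th t)) (hcomp (L2 pplus t th) (id2 (pbeta s t)));
  pbeta_nat2_2 : forall (s t t' : ob pS) (q q' : hom t t') (ps : cell q q'),
      heq2 (hcomp (id2 (pbeta s t')) (L2 pplus s ps)) (hcomp (R2 pplus ps s) (id2 (pbeta s t)));
  pbeta_Sg : forall (s s' t t' : ob pS) (p : hom s s') (q : hom t t'),
      heq2 (hcomp (id2 (pbeta s' t')) (Sg pplus p q)) (hcomp (Sginv pplus q p) (id2 (pbeta s t)));
  pbeta_inv : forall s t : ob pS, comp1 (pbeta t s) (pbeta s t) = id1 (F0 pplus s t);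
  pbeta_unit : forall s : ob pS, heq1 (pbeta s pe) (id1 s);
  pbeta_hex : forall s t u : ob pS,
      heq1 (pbeta (F0 pplus s t) u)
        (comp1 (R1 pplus (pbeta s u) t)
           (cast1 (eq_sym (aa_ob pplus_assoc s t u)) (eq_sym (aa_ob pplus_assoc s u t))
              (L1 pplus s (pbeta t u))))
}.

Record Action (S : PGM) (X : Cat2) : Type := {
  act :> CubData S X X;
  act_laws : CubLaws act;
  act_unit : UnitL act (pe S);
  act_assoc : ActAssoc (pplus S) act
}.
Arguments act {_ _} _.
Arguments act_laws {_ _} _.

Record Loc1 (S : PGM) (X : Cat2) (ac : Action S X)
  (a : ob S) (x : ob X) (b : ob S) (y : ob X) : Type := {
  l_s : ob S;
  l_al : hom (F0 (pplus S) l_s a) b;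
  l_ph : hom (F0 ac l_s x) y
}.
Arguments Loc1 {_ _} _ _ _ _ _.
Arguments l_s {_ _ _ _ _ _ _} _.
Arguments l_al {_ _ _ _ _ _ _} _.
Arguments l_ph {_ _ _ _ _ _ _} _.

(* representatives <p, A, F> of 2-cells *)
Record Loc2 (S : PGM) (X : Cat2) (ac : Action S X)
  (a : ob S) (x : ob X) (b : ob S) (y : ob X) (u v : Loc1 ac a x b y) : Type := {
  l_p : hom (l_s u) (l_s v);
  l_A : cell (l_al u) (comp1 (l_al v) (R1 (pplus S) l_p a));
  l_F : cell (l_ph u) (comp1 (l_ph v) (R1 ac l_p x))
}.
Arguments Loc2 {_ _ _ _ _ _ _} _ _.
Arguments Build_Loc2 {_ _ _ _ _ _ _ _ _} _ _ _.
Arguments l_p {_ _ _ _ _ _ _ _ _} _.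
Arguments l_A {_ _ _ _ _ _ _ _ _} _.
Arguments l_F {_ _ _ _ _ _ _ _ _} _.

Lemma compR_eq (A B C : Cat2) (F : CubData A B C) (FL : CubLaws F)
  (a a' a'' : ob A) (b : ob B) (z : ob C) (h : hom (F0 F a'' b) z)
  (p1 : hom a a') (p2 : hom a' a'') :
  comp1 (comp1 h (R1 F p2 b)) (R1 F p1 b) = comp1 h (R1 F (comp1 p2 p1) b).
Proof. rewrite (R1_comp FL). symmetry; apply (c_assoc (c2l C)). Qed.

Arguments compR_eq {_ _ _ _} _ {_ _ _ _ _} _ _ _.

Lemma idR_eq (A B C : Cat2) (F : CubData A B C) (FL : CubLaws F)
  (a : ob A) (b : ob B) (z : ob C) (h : hom (F0 F a b) z) :
  h = comp1 h (R1 F (id1 a) b).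
Proof. rewrite (R1_id FL), (c_idr (c2l C)). reflexivity. Qed.
Arguments idR_eq {_ _ _ _} _ {_} _ {_} _.

Definition loc_vcomp {S : PGM} {X : Cat2} {ac : Action S X} {a x b y}
  {u v w : Loc1 ac a x b y} (be : Loc2 v w) (al : Loc2 u v) : Loc2 u w :=
  Build_Loc2 (comp1 (l_p be) (l_p al))
    (castc eq_refl (compR_eq (pplus_laws S) (l_al w) (l_p al) (l_p be))
       (vcomp (hcomp (l_A be) (id2 (R1 (pplus S) (l_p al) a))) (l_A al)))
    (castc eq_refl (compR_eq (act_laws ac) (l_ph w) (l_p al) (l_p be))
       (vcomp (hcomp (l_F be) (id2 (R1 ac (l_p al) x))) (l_F al))).

Definition loc_id {S : PGM} {X : Cat2} {ac : Action S X} {a x b y}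
  (u : Loc1 ac a x b y) : Loc2 u u :=
  Build_Loc2 (id1 (l_s u))
    (castc eq_refl (idR_eq (pplus_laws S) a (l_al u)) (id2 (l_al u)))
    (castc eq_refl (idR_eq (act_laws ac) x (l_ph u)) (id2 (l_ph u))).

Definition loc_eq {S : PGM} {X : Cat2} {ac : Action S X} {a x b y}
  {u v : Loc1 ac a x b y} (al be : Loc2 u v) : Prop :=
  exists th : cell (l_p al) (l_p be),
    inv2 th /\
    vcomp (hcomp (id2 (l_al v)) (R2 (pplus S) th a)) (l_A al) = l_A be /\
    vcomp (hcomp (id2 (l_ph v)) (R2 ac th x)) (l_F al) = l_F be.

Definition loc_inv {S : PGM} {X : Cat2} {ac : Action S X} {a x b y}
  {u v : Loc1 ac a x b y} (al : Loc2 u v) : Prop :=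
  exists be : Loc2 v u,
    loc_eq (loc_vcomp be al) (loc_id u) /\ loc_eq (loc_vcomp al be) (loc_id v).

(* Main.v *)
Require Import Defs.
From Stdlib Require Import Logic.Eqdep.
Import EqdepTheory.

Ltac heqd H := unfold heq2, tot2 in H;
  repeat match type of H with
  | existT _ ?a _ = existT _ ?a _ => apply inj_pairT2 in H
  | existT _ ?a _ = existT _ ?b _ =>
      let E := fresh "E" in
      assert (E : a = b) by exact (f_equal (@projT1 _ _) H); subst
  end; subst.

Lemma heq2_eq {C : Cat2Data} {a b : ob C} {f g : hom a b} (x y : cell f g) :
  heq2 x y -> x = y.
Proof. intro H. heqd H. reflexivity. Qed.

Lemma castc_heq {C : Cat2Data} {a b : ob C} {f f' g g' : hom a b}
  (e1 : f = f') (e2 : g = g') (x : cell f g) : heq2 (castc e1 e2 x) x.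
Proof. destruct e1, e2. reflexivity. Qed.

Lemma hv_cong {C : Cat2Data} {a b a' b' : ob C} {f g h : hom a b} {f' g' h' : hom a' b'}
  (x : cell g h) (y : cell f g) (x' : cell g' h') (y' : cell f' g') :
  heq2 x x' -> heq2 y y' -> heq2 (vcomp x y) (vcomp x' y').
Proof. intros H1 H2. heqd H1. heqd H2. reflexivity. Qed.

Lemma hh_cong {C : Cat2Data} {a b c a' b' c' : ob C} {f f1 : hom a b} {g g1 : hom b c}
  {f' f1' : hom a' b'} {g' g1' : hom b' c'}
  (x : cell g g1) (y : cell f f1) (x' : cell g' g1') (y' : cell f' f1') :
  heq2 x x' -> heq2 y y' -> heq2 (hcomp x y) (hcomp x' y').
Proof. intros H1 H2. heqd H1. heqd H2. reflexivity. Qed.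

Lemma hv_idl' (C : Cat2) {a b a' b' : ob C} {f g h : hom a b} {h' : hom a' b'}
  (x : cell g h) (y : cell f g) : heq2 x (id2 h') -> heq2 (vcomp x y) y.
Proof. intros H1. heqd H1. rewrite (v_idl _ (c2l C)). reflexivity. Qed.

Lemma hv_idr' (C : Cat2) {a b a' b' : ob C} {f g h : hom a b} {h' : hom a' b'}
  (x : cell g h) (y : cell f g) : heq2 y (id2 h') -> heq2 (vcomp x y) x.
Proof. intros H1. heqd H1. rewrite (v_idr _ (c2l C)). reflexivity. Qed.

Lemma R2_cong {A B C : Cat2Data} (F : CubData A B C) (b : ob B)
  {s t s' t' : ob A} {p p1 : hom s t} {p' p1' : hom s' t'}
  (x : cell p p1) (x' : cell p' p1') : heq2 x x' -> heq2 (R2 F x b) (R2 F x' b).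
Proof. intros H. heqd H. reflexivity. Qed.

Lemma castc_v (C : Cat2) {a b : ob C} {f g g' : hom a b} (e : g = g') (x : cell f g) :
  castc eq_refl e x = vcomp (castc eq_refl e (id2 g)) x.
Proof. destruct e. simpl. symmetry. apply (v_idl _ (c2l C)). Qed.

Lemma castc_cancel (C : Cat2) {a b : ob C} {f g : hom a b} (e : f = g) :
  vcomp (castc eq_refl e (id2 f)) (castc eq_refl (eq_sym e) (id2 g)) = id2 g.
Proof. destruct e. simpl. apply (v_idl _ (c2l C)). Qed.

Lemma castc_id_heq {C : Cat2Data} {a b : ob C} {f g : hom a b} (e : f = g) :
  heq2 (castc eq_refl e (id2 f)) (id2 f).
Proof. apply castc_heq. Qed.

Lemma inv2_id (C : Cat2) {a b : ob C} (f : hom a b) : inv2 (id2 f).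
Proof. exists (id2 f). split; apply (v_idl _ (c2l C)). Qed.

Lemma inv2_castc (C : Cat2) {a b : ob C} {f f' g g' : hom a b} (e1 : f = f') (e2 : g = g')
  (x : cell f g) : inv2 x -> inv2 (castc e1 e2 x).
Proof. destruct e1, e2. simpl. auto. Qed.

Lemma inv2_comp (C : Cat2) {a b : ob C} {f g h : hom a b} (x : cell g h) (y : cell f g) :
  inv2 x -> inv2 y -> inv2 (vcomp x y).
Proof.
  intros [x' [Hx1 Hx2]] [y' [Hy1 Hy2]]. destruct (c2l C) as [cA0 cL0 cR0 v_assoc0 v_idl0 v_idr0 h_id20 h_interchange0 hA0 hL0 hR0].
  exists (vcomp y' x'). split.
  - rewrite v_assoc0. rewrite <- (v_assoc0 _ _ _ _ _ _ y' x' x). rewrite Hx1, v_idr0. exact Hy1.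
  - rewrite v_assoc0. rewrite <- (v_assoc0 _ _ _ _ _ _ x y y'). rewrite Hy2, v_idr0. exact Hx2.
Qed.

Lemma inv2_cancel_l (C : Cat2) {a b : ob C} {f g h : hom a b} (x : cell g h) (y : cell f g) :
  inv2 x -> inv2 (vcomp x y) -> inv2 y.
Proof.
  intros [x' [Hx1 Hx2]] [z' [Hz1 Hz2]]. destruct (c2l C) as [cA0 cL0 cR0 v_assoc0 v_idl0 v_idr0 h_id20 h_interchange0 hA0 hL0 hR0].
  exists (vcomp z' x). split.
  - rewrite <- v_assoc0. exact Hz1.
  - assert (E : y = vcomp x' (vcomp x y)) by (rewrite v_assoc0, Hx1, v_idl0; reflexivity).
    transitivity (vcomp (vcomp x' (vcomp x y)) (vcomp z' x)).
    { rewrite <- E. reflexivity. }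
    rewrite <- v_assoc0. rewrite (v_assoc0 _ _ _ _ _ _ (vcomp x y) z' x).
    rewrite Hz2, v_idl0. exact Hx1.
Qed.

Lemma inv2_lr (C : Cat2) {a b : ob C} {f g : hom a b} (x : cell f g) :
  (exists l, vcomp l x = id2 f) -> (exists r, vcomp x r = id2 g) -> inv2 x.
Proof.
  intros [l Hl] [r Hr]. destruct (c2l C) as [cA0 cL0 cR0 v_assoc0 v_idl0 v_idr0 h_id20 h_interchange0 hA0 hL0 hR0]. exists l. split; auto.
  assert (E : l = r).
  { rewrite <- (v_idr0 _ _ _ _ l). rewrite <- Hr. rewrite v_assoc0, Hl, v_idl0. reflexivity. }
  subst. exact Hr.
Qed.

Lemma whiskR_v (C : Cat2) {a b c : ob C} {f g h : hom b c} (x : cell g h) (y : cell f g) (P : hom a b) :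
  hcomp (vcomp x y) (id2 P) = vcomp (hcomp x (id2 P)) (hcomp y (id2 P)).
Proof. destruct (c2l C) as [cA0 cL0 cR0 v_assoc0 v_idl0 v_idr0 h_id20 h_interchange0 hA0 hL0 hR0]. rewrite <- h_interchange0, v_idl0. reflexivity. Qed.

Lemma whiskL_v (C : Cat2) {a b c : ob C} {f g h : hom a b} (x : cell g h) (y : cell f g) (P : hom b c) :
  hcomp (id2 P) (vcomp x y) = vcomp (hcomp (id2 P) x) (hcomp (id2 P) y).
Proof. destruct (c2l C) as [cA0 cL0 cR0 v_assoc0 v_idl0 v_idr0 h_id20 h_interchange0 hA0 hL0 hR0]. rewrite <- h_interchange0, v_idl0. reflexivity. Qed.

Lemma whiskR_id (C : Cat2) {a b c : ob C} (f : hom b c) (P : hom a b) :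
  hcomp (id2 f) (id2 P) = id2 (comp1 f P).
Proof. apply (h_id2 _ (c2l C)). Qed.

Lemma inv2_whiskR (C : Cat2) {a b c : ob C} {f g : hom b c} (x : cell f g) (P : hom a b) :
  inv2 x -> inv2 (hcomp x (id2 P)).
Proof.
  intros [x' [H1 H2]]. exists (hcomp x' (id2 P)).
  rewrite <- !whiskR_v, H1, H2, !whiskR_id. split; reflexivity.
Qed.

Lemma inv2_whiskL (C : Cat2) {a b c : ob C} {f g : hom a b} (x : cell f g) (P : hom b c) :
  inv2 x -> inv2 (hcomp (id2 P) x).
Proof.
  intros [x' [H1 H2]]. exists (hcomp (id2 P) x').
  rewrite <- !whiskL_v, H1, H2, !whiskR_id. split; reflexivity.
Qed.

Lemma interch (C : Cat2) {a b c : ob C} {f g : hom b c} {K I : hom a b} (x : cell f g) (T : cell K I) :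
  vcomp (hcomp (id2 g) T) (hcomp x (id2 K)) = vcomp (hcomp x (id2 I)) (hcomp (id2 f) T).
Proof. destruct (c2l C) as [cA0 cL0 cR0 v_assoc0 v_idl0 v_idr0 h_id20 h_interchange0 hA0 hL0 hR0]. rewrite <- !h_interchange0, v_idl0, v_idr0, v_idl0, v_idr0. reflexivity. Qed.

Lemma inv2_R2 {A B C : Cat2} {F : CubData A B C} (FL : CubLaws F) {s t : ob A} {p p' : hom s t}
  (x : cell p p') (b : ob B) : inv2 x -> inv2 (R2 F x b).
Proof.
  intros [x' [H1 H2]]. exists (R2 F x' b).
  rewrite <- !(R2_v _ _ _ _ FL), H1, H2, !(R2_id _ _ _ _ FL). split; reflexivity.
Qed.

Lemma fwd (C : Cat2) {X Y b : ob C} (al : hom X b) (al' : hom Y b) (P : hom X Y) (Q : hom Y X)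
  {K I : hom X X} {K' I' : hom Y Y} (A : cell al (comp1 al' P)) (B : cell al' (comp1 al Q))
  (T : cell K I) (T' : cell K' I')
  (E1 : comp1 (comp1 al Q) P = comp1 al K) (E2 : al = comp1 al I)
  (E3 : comp1 (comp1 al' P) Q = comp1 al' K') (E4 : al' = comp1 al' I') :
  inv2 T -> inv2 T' ->
  vcomp (hcomp (id2 al) T) (castc eq_refl E1 (vcomp (hcomp B (id2 P)) A)) = castc eq_refl E2 (id2 al) ->
  vcomp (hcomp (id2 al') T') (castc eq_refl E3 (vcomp (hcomp A (id2 Q)) B)) = castc eq_refl E4 (id2 al') ->
  inv2 A.
Proof.
  intros HT HT' H1 H2.
  pose proof (c2l C) as LC. destruct LC as [cA0 cL0 cR0 vA vL vR hI hX hA hL hR].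
  assert (HZ : inv2 (vcomp (hcomp B (id2 P)) A)).
  { apply (inv2_cancel_l C (vcomp (hcomp (id2 al) T) (castc eq_refl E1 (id2 _)))).
    - apply inv2_comp. apply inv2_whiskL, HT. apply inv2_castc, inv2_id.
    - rewrite <- vA, <- castc_v, H1. apply inv2_castc, inv2_id. }
  assert (HZ' : inv2 (vcomp (hcomp A (id2 Q)) B)).
  { apply (inv2_cancel_l C (vcomp (hcomp (id2 al') T') (castc eq_refl E3 (id2 _)))).
    - apply inv2_comp. apply inv2_whiskL, HT'. apply inv2_castc, inv2_id.
    - rewrite <- vA, <- castc_v, H2. apply inv2_castc, inv2_id. }
  assert (HBP : inv2 (hcomp B (id2 P))).
  { apply inv2_lr.
    - destruct HZ' as [z' [Hz1 Hz2]].
      exists (hcomp (vcomp z' (hcomp A (id2 Q))) (id2 P)).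
      rewrite <- whiskR_v, <- vA, Hz1. apply whiskR_id.
    - destruct HZ as [z [Hz1 Hz2]]. exists (vcomp A z). rewrite vA. exact Hz2. }
  exact (inv2_cancel_l C _ _ HBP HZ).
Qed.

Lemma castc_cancel' (C : Cat2) {a b : ob C} {f g : hom a b} (e : f = g) :
  vcomp (castc eq_refl (eq_sym e) (id2 g)) (castc eq_refl e (id2 f)) = id2 f.
Proof. destruct e. simpl. apply (v_idl _ (c2l C)). Qed.

Lemma interch2 (C : Cat2) {a b c : ob C} {f g : hom a b} {K I : hom b c} (T : cell K I) (x : cell f g) :
  vcomp (hcomp T (id2 g)) (hcomp (id2 K) x) = vcomp (hcomp (id2 I) x) (hcomp T (id2 f)).
Proof.
  pose proof (c2l C) as LC. destruct LC as [cA0 cL0 cR0 vA vL vR hI hX hA hL hR].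
  rewrite <- !hX, vL, vR, vL, vR. reflexivity. Qed.

Lemma ff (C : Cat2) {s t Z : ob C} (p : hom s t) (q : hom t s) (Ps : cell (comp1 p q) (id1 t)) :
  inv2 Ps -> forall (f g : hom Z t) (x y : cell f g),
  heq2 (hcomp (id2 q) x) (hcomp (id2 q) y) -> x = y.
Proof.
  intros [Ps' [HP1 HP2]] f g x y H.
  pose proof (c2l C) as LC. destruct LC as [cA0 cL0 cR0 vA vL vR hI hX hA hL hR].
  assert (key : forall x : cell f g, hcomp (id2 (id1 t)) x =
     vcomp (hcomp Ps (id2 g)) (vcomp (hcomp (id2 (comp1 p q)) x) (hcomp Ps' (id2 f)))).
  { intro z. rewrite vA, interch2, <- vA, <- whiskR_v, HP2, whiskR_id, vR. reflexivity. }
  assert (E : hcomp (id2 (comp1 p q)) x = hcomp (id2 (comp1 p q)) y).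
  { apply heq2_eq. rewrite <- hI.
    eapply eq_trans; [symmetry; apply hA|]. eapply eq_trans; [|apply hA].
    apply hh_cong; [reflexivity | exact H]. }
  assert (E2 : hcomp (id2 (id1 t)) x = hcomp (id2 (id1 t)) y) by (rewrite !key, E; reflexivity).
  apply heq2_eq. eapply eq_trans; [symmetry; apply hL|]. eapply eq_trans; [|apply hL].
  rewrite E2. reflexivity.
Qed.

Lemma full (C : Cat2) {s t Z : ob C} (p : hom s t) (q : hom t s)
  (Ph : cell (comp1 q p) (id1 s)) (Ps : cell (comp1 p q) (id1 t)) :
  inv2 Ph -> inv2 Ps -> forall (f g : hom Z s) (sg : cell (comp1 p f) (comp1 p g)),
  inv2 sg -> exists tau : cell f g, hcomp (id2 p) tau = sg /\ inv2 tau.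
Proof.
  intros HPh HPs f g sg Hsg.
  pose proof HPh as [Ph' [HP1 HP2]].
  pose proof (c2l C) as LC. destruct LC as [cA0 cL0 cR0 vA vL vR hI hX hA hL hR].
  set (rho := castc (cA0 _ _ _ _ q p f) (cA0 _ _ _ _ q p g) (hcomp (id2 q) sg)).
  set (cf := castc eq_refl (eq_sym (cL0 _ _ f)) (id2 f)).
  set (cg := castc eq_refl (cL0 _ _ g) (id2 (comp1 (id1 s) g))).
  exists (vcomp cg (vcomp (hcomp Ph (id2 g)) (vcomp rho (vcomp (hcomp Ph' (id2 f)) cf)))).
  set (tau := vcomp cg (vcomp (hcomp Ph (id2 g)) (vcomp rho (vcomp (hcomp Ph' (id2 f)) cf)))).
  split.
  2:{ unfold tau. repeat apply inv2_comp.
      - apply inv2_castc, inv2_id.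
      - apply inv2_whiskR, HPh.
      - apply inv2_castc, inv2_whiskL, Hsg.
      - apply inv2_whiskR. exists Ph. tauto.
      - apply inv2_castc, inv2_id. }
  set (cg' := castc eq_refl (eq_sym (cL0 _ _ g)) (id2 g)).
  set (cf' := castc eq_refl (cL0 _ _ f) (id2 (comp1 (id1 s) f))).
  assert (EU : hcomp (id2 (id1 s)) tau = vcomp cg' (vcomp tau cf')).
  { apply heq2_eq. eapply eq_trans; [apply hL|]. symmetry.
    eapply eq_trans; [eapply hv_idl'; apply castc_heq|].
    eapply eq_trans; [eapply hv_idr'; apply castc_heq|]. reflexivity. }
  assert (EU2 : vcomp cg' (vcomp tau cf') =
      vcomp (hcomp Ph (id2 g)) (vcomp rho (hcomp Ph' (id2 f)))).
  { unfold tau. rewrite !vA. unfold cg', cg. rewrite castc_cancel', vL.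
    rewrite <- !vA. f_equal. f_equal. unfold cf, cf'. rewrite castc_cancel', vR. reflexivity. }
  assert (Eqp : hcomp (id2 (comp1 q p)) tau = rho).
  { assert (N : vcomp (hcomp Ph (id2 g)) (hcomp (id2 (comp1 q p)) tau) =
                vcomp (hcomp Ph (id2 g)) rho).
    { rewrite interch2, EU, EU2, <- !vA, <- whiskR_v, HP1, whiskR_id, vR. reflexivity. }
    assert (NN : vcomp (hcomp Ph' (id2 g)) (hcomp Ph (id2 g)) = id2 _)
      by (rewrite <- whiskR_v, HP1; apply whiskR_id).
    transitivity (vcomp (vcomp (hcomp Ph' (id2 g)) (hcomp Ph (id2 g))) (hcomp (id2 (comp1 q p)) tau)).
    { rewrite NN, vL. reflexivity. }
    rewrite <- vA, N, vA, NN, vL. reflexivity. }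
  apply (ff C p q Ps HPs).
  eapply eq_trans; [apply hA|]. rewrite hI, Eqp. apply castc_heq.
Qed.

Lemma adj (C : Cat2) {s t : ob C} (p : hom s t) (q : hom t s)
  (Ph : cell (comp1 q p) (id1 s)) (Ps : cell (comp1 p q) (id1 t)) :
  inv2 Ph -> inv2 Ps -> exists Th : cell (comp1 q p) (id1 s),
  inv2 Th /\ heq2 (hcomp (id2 p) Th) (hcomp Ps (id2 p)).
Proof.
  intros HPh HPs.
  set (sg := castc (eq_sym (c_assoc (c2l C) p q p))
               (eq_trans (c_idl (c2l C) p) (eq_sym (c_idr (c2l C) p))) (hcomp Ps (id2 p))).
  destruct (full C p q Ph Ps HPh HPs (comp1 q p) (id1 s) sg) as [tau [H1 H2]].
  - apply inv2_castc, inv2_whiskR, HPs.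
  - exists tau. split; auto. rewrite H1. apply castc_heq.
Qed.

Lemma castnat (C : Cat2) {X Y Y2 b : ob C} {f g : hom Y b} (x : cell f g) (Q : hom Y2 Y) (P : hom X Y2)
  (K : hom X Y) (eK : K = comp1 Q P) (e1 : comp1 (comp1 f Q) P = comp1 f K)
  (e2 : comp1 (comp1 g Q) P = comp1 g K) :
  vcomp (castc eq_refl e2 (id2 _)) (hcomp (hcomp x (id2 Q)) (id2 P)) =
  vcomp (hcomp x (id2 K)) (castc eq_refl e1 (id2 _)).
Proof.
  subst K. apply heq2_eq.
  eapply eq_trans; [eapply hv_idl'; apply castc_heq|].
  symmetry. eapply eq_trans; [eapply hv_idr'; apply castc_heq|].
  rewrite <- (h_id2 _ (c2l C)). apply (h_assoc _ (c2l C)).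
Qed.

Lemma castnat2 (C : Cat2) {Y b : ob C} {f g : hom Y b} (x : cell f g) (I : hom Y Y)
  (eI : I = id1 Y) (e1 : f = comp1 f I) (e2 : g = comp1 g I) :
  vcomp (hcomp x (id2 I)) (castc eq_refl e1 (id2 f)) = vcomp (castc eq_refl e2 (id2 g)) x.
Proof.
  subst I. apply heq2_eq.
  eapply eq_trans; [eapply hv_idr'; apply castc_heq|].
  symmetry. eapply eq_trans; [eapply hv_idl'; apply castc_heq|].
  symmetry. apply (h_idr _ (c2l C)).
Qed.

Definition mkB {A B C : Cat2} {F : CubData A B C} (FL : CubLaws F) {s t : ob A} (p : hom s t)
  (q : hom t s) (Ps' : cell (id1 t) (comp1 p q)) (a : ob B) {b : ob C}
  (al : hom (F0 F s a) b) (al' : hom (F0 F t a) b) (A' : cell (comp1 al' (R1 F p a)) al)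
  : cell al' (comp1 al (R1 F q a)) :=
  vcomp (hcomp A' (id2 (R1 F q a)))
   (vcomp (castc eq_refl (eq_sym (compR_eq FL al' q p)) (id2 _))
     (vcomp (hcomp (id2 al') (R2 F Ps' a)) (castc eq_refl (idR_eq FL a al') (id2 al')))).

Lemma c2 {A B C : Cat2} {F : CubData A B C} (FL : CubLaws F) {s t : ob A} (p : hom s t)
  (q : hom t s) (Ps : cell (comp1 p q) (id1 t)) (Ps' : cell (id1 t) (comp1 p q)) (a : ob B) {b : ob C}
  (al : hom (F0 F s a) b) (al' : hom (F0 F t a) b) (A0 : cell al (comp1 al' (R1 F p a)))
  (A' : cell (comp1 al' (R1 F p a)) al) :
  vcomp Ps Ps' = id2 _ -> vcomp A0 A' = id2 _ ->
  vcomp (hcomp (id2 al') (R2 F Ps a))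
    (castc eq_refl (compR_eq FL al' q p) (vcomp (hcomp A0 (id2 (R1 F q a))) (mkB FL p q Ps' a al al' A')))
  = castc eq_refl (idR_eq FL a al') (id2 al').
Proof.
  intros HP HA.
  pose proof (c2l C) as LC. destruct LC as [cA0 cL0 cR0 vA vL vR hI hX hA hL hR].
  rewrite castc_v. unfold mkB.
  rewrite (vA _ _ _ _ _ _ (hcomp A0 _)), <- whiskR_v, HA, whiskR_id, vL.
  rewrite (vA _ _ _ _ _ _ (castc _ _ _)), castc_cancel, vL.
  rewrite vA, <- whiskL_v, <- (R2_v _ _ _ _ FL), HP, (R2_id _ _ _ _ FL), whiskR_id, vL.
  reflexivity.
Qed.

Lemma c1 {A B C : Cat2} {F : CubData A B C} (FL : CubLaws F) {s t : ob A} (p : hom s t)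
  (q : hom t s) (Th : cell (comp1 q p) (id1 s)) (Ps : cell (comp1 p q) (id1 t))
  (Ps' : cell (id1 t) (comp1 p q)) (a : ob B) {b : ob C}
  (al : hom (F0 F s a) b) (al' : hom (F0 F t a) b) (A0 : cell al (comp1 al' (R1 F p a)))
  (A' : cell (comp1 al' (R1 F p a)) al) :
  heq2 (hcomp (id2 p) Th) (hcomp Ps (id2 p)) ->
  vcomp Ps Ps' = id2 _ -> vcomp A' A0 = id2 _ ->
  vcomp (hcomp (id2 al) (R2 F Th a))
    (castc eq_refl (compR_eq FL al p q) (vcomp (hcomp (mkB FL p q Ps' a al al' A') (id2 (R1 F p a))) A0))
  = castc eq_refl (idR_eq FL a al) (id2 al).
Proof.
  intros HTh HP HA.
  pose proof (c2l C) as LC. destruct LC as [cA0 cL0 cR0 vA vL vR hI hX hA hL hR].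
  rewrite castc_v. unfold mkB. rewrite !whiskR_v.
  rewrite <- (vA _ _ _ _ _ _ (hcomp (hcomp A' _) _)).
  rewrite (vA _ _ _ _ _ _ (castc _ _ _) (hcomp (hcomp A' _) _)).
  rewrite (castnat C A' _ _ _ (R1_comp FL a p q) (compR_eq FL (comp1 al' (R1 F p a)) p q)).
  rewrite <- vA, (vA _ _ _ _ _ _ (hcomp (id2 al) _)), interch.
  rewrite <- vA, (vA _ _ _ _ _ _ (castc _ _ _) _ A0), (vA _ _ _ _ _ _ (hcomp (id2 _) (R2 F Th a)) _ A0).

  match goal with |- vcomp _ (vcomp ?M _) = _ =>
    assert (EM : M = castc eq_refl (idR_eq FL a (comp1 al' (R1 F p a))) (id2 _)) end.
  { apply heq2_eq. eapply eq_trans; [|symmetry; apply castc_heq].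
    eapply eq_trans.
    { apply (hv_cong _ _ (hcomp (id2 al') (hcomp (R2 F Ps a) (id2 (R1 F p a))))
                         (hcomp (id2 al') (hcomp (R2 F Ps' a) (id2 (R1 F p a))))).
      - rewrite <- hI. eapply eq_trans; [symmetry; apply hA|].
        apply hh_cong; [reflexivity|].
        rewrite <- (R2_id _ _ _ _ FL). eapply eq_trans; [symmetry; apply (R2_h _ _ _ _ FL)|].
        eapply eq_trans; [apply R2_cong; exact HTh|]. apply (R2_h _ _ _ _ FL).
      - eapply eq_trans; [eapply hv_idl'; apply castc_heq|].
        eapply eq_trans; [eapply hv_idl'|].
        { eapply eq_trans; [eapply hh_cong; [apply castc_heq | reflexivity]|].
          rewrite hI. reflexivity. }
        eapply eq_trans; [eapply hv_idr'|].
        { eapply eq_trans; [eapply hh_cong; [apply castc_heq | reflexivity]|].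
          rewrite hI. reflexivity. }
        symmetry. apply hA. }
    rewrite <- whiskL_v, <- whiskR_v, <- (R2_v _ _ _ _ FL), HP, (R2_id _ _ _ _ FL), !hI.
    rewrite (R1_id FL t a), cL0. reflexivity. }
  rewrite EM, vA.
  rewrite (castnat2 C A' _ (R1_id FL s a) _ (idR_eq FL a al)).
  rewrite <- vA, HA, vR. reflexivity.
Qed.

Theorem mainTheorem13 (S : PGM) (X : Cat2) (ac : Action S X)
  (a : ob S) (x : ob X) (b : ob S) (y : ob X) (u v : Loc1 ac a x b y)
  (al : Loc2 u v) :
  loc_inv al <-> isEquiv1 (l_p al) /\ inv2 (l_A al) /\ inv2 (l_F al).
Proof.
  split.
  - intros [be [[th [Hth [EA EF]]] [th' [Hth' [EA' EF']]]]].
    split; [|split].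
    + exists (l_p be). split; [exists th; exact Hth | exists th'; exact Hth'].
    + exact (fwd _ (l_al u) (l_al v) _ _ (l_A al) (l_A be) (R2 (pplus S) th a) (R2 (pplus S) th' a)
               _ _ _ _ (inv2_R2 (pplus_laws S) th a Hth) (inv2_R2 (pplus_laws S) th' a Hth') EA EA').
    + exact (fwd _ (l_ph u) (l_ph v) _ _ (l_F al) (l_F be) (R2 ac th x) (R2 ac th' x)
               _ _ _ _ (inv2_R2 (act_laws ac) th x Hth) (inv2_R2 (act_laws ac) th' x Hth') EF EF').
  - intros [[q [[Ph HPh] [Ps HPs]]] [HA HF]].
    destruct (adj S (l_p al) q Ph Ps HPh HPs) as [Th [HTh HTh']].
    pose proof HPs as [Ps' [HPs1 HPs2]].
    destruct HA as [A' [HA1 HA2]]. destruct HF as [F' [HF1 HF2]].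
    exists (Build_Loc2 q (mkB (pplus_laws S) (l_p al) q Ps' a (l_al u) (l_al v) A')
                         (mkB (act_laws ac) (l_p al) q Ps' x (l_ph u) (l_ph v) F')).
    split.
    + exists Th. split; [exact HTh|split].
      * exact (c1 (pplus_laws S) (l_p al) q Th Ps Ps' a (l_al u) (l_al v) (l_A al) A' HTh' HPs2 HA1).
      * exact (c1 (act_laws ac) (l_p al) q Th Ps Ps' x (l_ph u) (l_ph v) (l_F al) F' HTh' HPs2 HF1).
    + exists Ps. split; [exact HPs|split].
      * exact (c2 (pplus_laws S) (l_p al) q Ps Ps' a (l_al u) (l_al v) (l_A al) A' HPs2 HA2).
      * exact (c2 (act_laws ac) (l_p al) q Ps Ps' x (l_ph u) (l_ph v) (l_F al) F' HPs2 HF2).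
Qed.
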